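(* Let $\rho\in(0,1)$ and $c_A,c_K>0$. There is a constant $c_1>0$, depending only on $A,B,Q,R,\rho,c_A,c_K$ and the dimensions, such that for any $K,K'\in\mathbb{R}^{k\times d}$ with $\|K\|,\|K'\|\le c_K$, $\|A-BK\|,\|A-BK'\|\le c_A$ and $\rho(A-BK),\rho(A-BK')\le\rho$, $$\|\theta_K-\theta_{K'}\|_F\le c_1\|K-K'\|_F.$$
   Context: $A\in\mathbb{R}^{d\times d}$, $B\in\mathbb{R}^{d\times k}$, $Q\in\mathbb{R}^{d\times d}$, $R\in\mathbb{R}^{k\times k}$ symmetric positive definite. $\rho(\cdot)$ is the spectral radius, $\|\cdot\|$ the operator norm. For $\rho(A-BK)<1$, $P_K$ is the solution of $P_K=Q+K^\top RK+(A-BK)^\top P_K(A-BK)$ and $$\theta_K=\begin{bmatrix}Q+A^\top P_KA & A^\top P_KB\\ B^\top P_KA & R+B^\top P_KB\end{bmatrix}.$$ *)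

(* Defs.v *)
From HB Require Import structures.
From mathcomp Require Import all_boot all_order all_algebra.
From mathcomp Require Import complex.
From mathcomp Require Import boolp classical_sets reals.
Set Implicit Arguments. Unset Strict Implicit. Unset Printing Implicit Defensive.
Import Order.TTheory GRing.Theory Num.Theory.
Local Open Scope ring_scope.
Local Open Scope classical_set_scope.

Definition vnorm (F : realType) (n : nat) (x : 'cV[F]_n) : F :=
  Num.sqrt (\sum_(i < n) x i 0 ^+ 2).

Definition opnorm (F : realType) (m n : nat) (M : 'M[F]_(m, n)) : F :=
  sup [set vnorm (M *m x) | x in [set x : 'cV[F]_n | vnorm x <= 1]].

Definition frob (F : realType) (m n : nat) (M : 'M[F]_(m, n)) : F :=
  Num.sqrt (\sum_(i < m) \sum_(j < n) M i j ^+ 2).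

Definition spectral_radius (F : realType) (n : nat) (M : 'M[F]_n) : F :=
  sup [set Normc.normc l | l in
        [set l : F[i] | eigenvalue (map_mx (fun a : F => (a%:C)%C) M) l]].

Definition posdef (F : realType) (n : nat) (M : 'M[F]_n) : Prop :=
  M^T = M /\ forall x : 'cV[F]_n, x != 0 -> 0 < (x^T *m M *m x) 0 0.

(* theta_K built from P = P_K *)
Definition theta (F : realType) (d k : nat) (A : 'M[F]_d) (B : 'M[F]_(d, k))
  (Q : 'M[F]_d) (Rm : 'M[F]_k) (P : 'M[F]_d) : 'M[F]_(d + k) :=
  block_mx (Q + A^T *m P *m A) (A^T *m P *m B)
           (B^T *m P *m A) (Rm + B^T *m P *m B).

Definition lyap_sol (F : realType) (d k : nat) (A : 'M[F]_d) (B : 'M[F]_(d, k))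
  (Q : 'M[F]_d) (Rm : 'M[F]_k) (K : 'M[F]_(k, d)) (P : 'M[F]_d) : Prop :=
  P = Q + K^T *m Rm *m K + (A - B *m K)^T *m P *m (A - B *m K).

(* Main.v *)
Require Import Defs.
From HB Require Import structures.
From mathcomp Require Import all_boot all_order all_algebra.
From mathcomp Require Import complex.
From mathcomp Require Import boolp classical_sets reals.
Import Order.TTheory GRing.Theory Num.Theory.
From mathcomp Require Import ring lra.
Local Open Scope ring_scope.
Set Implicit Arguments. Unset Strict Implicit.


Lemma mul_entry_le (R : numDomainType) m n p (X : 'M[R]_(m,n)) (Y : 'M[R]_(n,p)) (a b : R) :
  (forall i j, `|X i j| <= a) -> (forall i j, `|Y i j| <= b) ->
  forall i j, `|(X *m Y) i j| <= n%:R * (a * b).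
Proof.
move=> hX hY i j; rewrite mxE.
apply: le_trans (ler_norm_sum _ _ _) _.
have -> : n%:R * (a * b) = \sum_(l < n) (a * b).
  by rewrite sumr_const card_ord mulr_natl.
apply: ler_sum => l _; rewrite normrM.
by apply: ler_pM; rewrite ?normr_ge0.
Qed.

Lemma tr_entry_le (R : numDomainType) m n (X : 'M[R]_(m,n)) (a : R) :
  (forall i j, `|X i j| <= a) -> forall i j, `|X^T i j| <= a.
Proof. by move=> h i j; rewrite mxE. Qed.

Lemma sumabs_ge (R : numDomainType) m n (X : 'M[R]_(m,n)) i j :
  `|X i j| <= \sum_i0 \sum_j0 `|X i0 j0|.
Proof.
rewrite (bigD1 i) //= (bigD1 j) //= -addrA lerDl.
by apply: addr_ge0; apply: sumr_ge0 => *; rewrite ?sumr_ge0.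
Qed.

Lemma sqrt_le_nat (F : realType) (s b : F) (m : nat) :
  0 <= b -> s <= m%:R * b ^+ 2 -> Num.sqrt s <= m%:R * b.
Proof.
move=> b0 hs.
have h : m%:R * b ^+ 2 <= (m%:R * b) ^+ 2.
  rewrite exprMn ler_wpM2r ?sqr_ge0 //.
  case: m {hs} => [|m]; first by rewrite expr0n.
  by rewrite -natrX ler_nat expnS leq_pmulr.
have -> : m%:R * b = Num.sqrt ((m%:R * b) ^+ 2).
  by rewrite sqrtr_sqr ger0_norm ?mulr_ge0 ?ler0n.
apply: ler_wsqrtr; exact: le_trans hs h.
Qed.

Lemma frob_le (F : realType) m n (X : 'M[F]_(m,n)) (b : F) :
  0 <= b -> (forall i j, `|X i j| <= b) -> frob X <= (m * n)%:R * b.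
Proof.
move=> b0 h; apply: sqrt_le_nat => //.
rewrite natrM -mulrA.
have -> : m%:R * (n%:R * b ^+ 2) = \sum_(i < m) \sum_(j < n) b ^+ 2.
  by rewrite sumr_const card_ord mulr_natl; congr (_ *+ _);
     rewrite sumr_const card_ord mulr_natl.
apply: ler_sum => i _; apply: ler_sum => j _.
rewrite -real_normK ?num_real // lerXn2r ?nnegrE ?normr_ge0 //.
Qed.

Lemma entry_le_frob (F : realType) m n (X : 'M[F]_(m,n)) i j :
  `|X i j| <= frob X.
Proof.
rewrite /frob -sqrtr_sqr; apply: ler_wsqrtr.
rewrite (bigD1 i) //= (bigD1 j) //= -addrA lerDl.
by apply: addr_ge0; apply: sumr_ge0 => *; rewrite ?sumr_ge0 // => *; rewrite sqr_ge0.
Qed.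

Lemma frob_ge0 (F : realType) m n (X : 'M[F]_(m,n)) : 0 <= frob X.
Proof. exact: sqrtr_ge0. Qed.


Lemma entry_le_vnorm (F : realType) n (x : 'cV[F]_n) i j : `|x i j| <= vnorm x.
Proof.
have -> : j = 0 by apply/val_inj; rewrite /= (ord1 j).
rewrite /vnorm -sqrtr_sqr; apply: ler_wsqrtr.
rewrite (bigD1 i) //= lerDl.
by apply: sumr_ge0 => *; rewrite sqr_ge0.
Qed.

Lemma vnorm_le (F : realType) n (x : 'cV[F]_n) (b : F) :
  0 <= b -> (forall i, `|x i 0| <= b) -> vnorm x <= n%:R * b.
Proof.
move=> b0 h; apply: sqrt_le_nat => //.
have -> : n%:R * b ^+ 2 = \sum_(i < n) b ^+ 2.
  by rewrite sumr_const card_ord mulr_natl.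
apply: ler_sum => i _.
rewrite -real_normK ?num_real // lerXn2r ?nnegrE ?normr_ge0 //.
Qed.

Lemma entry_le_opnorm (F : realType) m n (M : 'M[F]_(m,n)) i j :
  `|M i j| <= opnorm M.
Proof.
set beta := \sum_i0 \sum_j0 `|M i0 j0|.
have beta0 : 0 <= beta by apply: sumr_ge0 => *; apply: sumr_ge0 => *.
have ub : has_ubound [set vnorm (M *m x) | x in [set x : 'cV[F]_n | vnorm x <= 1]].
  exists (m%:R * (n%:R * (beta * 1))) => _ [x /= hx <-].
  apply: vnorm_le; first by rewrite mulr_ge0 ?ler0n ?mulr1.
  move=> i0; apply: (@mul_entry_le _ _ _ _ _ _ beta 1) => i1 j1.
    exact: sumabs_ge.
  exact: (le_trans (entry_le_vnorm x i1 j1) hx).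
set e := delta_mx j (0 : 'I_1) : 'cV[F]_n.
have ee : forall i0, e i0 0 = (i0 == j)%:R.
  by move=> i0; rewrite mxE eqxx andbT.
have he : vnorm e <= 1.
  rewrite /vnorm (bigD1 j) //= big1 ?ee ?eqxx ?expr1n ?addr0 ?sqrtr1 //.
  by move=> i0 /negbTE; rewrite ee => ->; rewrite expr0n.
apply: le_trans (_ : vnorm (M *m e) <= _).
  have -> : M i j = (M *m e) i 0.
    rewrite mxE (bigD1 j) //= ee eqxx mulr1 big1 ?addr0 //.
    by move=> l /negbTE; rewrite ee => ->; rewrite mulr0.
  exact: entry_le_vnorm.
apply: (ub_le_sup ub); by exists e.
Qed.


Section Decay.
Variables (R : numDomainType) (n : nat) (L : 'M[R]_n.+1) (s : seq R) (rho eta r a : R).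
Hypotheses (hs : size s = n.+1) (hprod : \prod_(z <- s) (L - z%:M) = 0)
  (hz : forall z, z \in s -> `|z| <= rho) (rho0 : 0 <= rho) (eta0 : 0 <= eta)
  (rhor : rho <= r) (a0 : 0 <= a) (her : rho * eta + 1 <= r * eta)
  (hL : forall i j, `|L i j| <= a).

Let D := n.+1%:R * (a + rho).
Let M k := \prod_(z <- take k s) (L - z%:M).

Lemma D0 : 0 <= D.
Proof. by rewrite /D mulr_ge0 ?ler0n ?addr_ge0. Qed.

Lemma hnth k : `|nth 0 s k| <= rho.
Proof.
case: (ltnP k (size s)) => hk; first by apply: hz; rewrite mem_nth.
by rewrite nth_default // normr0.
Qed.

Lemma Mstep k : (k < n.+1)%N -> M k.+1 = M k * (L - (nth 0 s k)%:M).
Proof. by move=> hk; rewrite /M (take_nth 0) ?hs // big_rcons. Qed.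

Lemma Mlast : M n.+1 = 0.
Proof. by rewrite /M take_oversize ?hs. Qed.

Lemma M0 : M 0 = 1.
Proof. by rewrite /M take0 big_nil. Qed.

Lemma hLz z : `|z| <= rho -> forall i j, `|(L - z%:M) i j| <= a + rho.
Proof.
move=> hz' i j; rewrite !mxE; apply: le_trans (ler_normB _ _) _.
apply: lerD => //; case: (i == j); rewrite ?mulr1n ?mulr0n ?normr0 //.
Qed.

Lemma hM k i j : `|M k i j| <= D ^+ k.
Proof.
elim: k i j => [|k IH] i j.
  rewrite M0 expr0 mxE; case: (i == j); rewrite ?normr1 ?normr0 //.
case: (ltnP k n.+1) => hk.
  rewrite Mstep // -mulmxE exprSr /D mulrA [_ * n.+1%:R]mulrC -mulrA.
  by apply: mul_entry_le => // i0 j0; apply: hLz; apply: hnth.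
rewrite /M take_oversize ?hs //; last by apply: leqW.
by rewrite hprod mxE normr0 exprn_ge0 // D0.
Qed.

Lemma LM k : (k < n.+1)%N -> L * M k = M k.+1 + nth 0 s k *: M k.
Proof.
move=> hk; rewrite Mstep //.
have -> : L * M k = M k * L.
  by apply: commr_prod => z _; rewrite /GRing.comm mulrBr mulrBl -!mulmxE scalar_mxC.
by rewrite mulrBr -!mulmxE scalar_mxC mul_scalar_mx subrK.
Qed.

Lemma powrep m : exists c : nat -> R,
  L ^+ m = \sum_(k < n.+1) c k *: M k /\ forall k, `|c k| <= eta ^+ k * r ^+ m.
Proof.
elim: m => [|m [c [hc hb]]].
  exists (fun k => (k == 0%N)%:R); split.
    rewrite big_ord_recl /= scale1r M0 big1 ?addr0 // => i _.
    by rewrite /= scale0r.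
  by case=> [|k]; rewrite /= ?expr0 ?mulr1 ?normr1 ?normr0 ?exprn_ge0.
exists (fun k => nth 0 s k * c k + (if k is k'.+1 then c k' else 0)); split.
  rewrite exprS hc mulr_sumr.
  rewrite (eq_bigr (fun k : 'I_n.+1 => c k *: M k.+1 + (nth 0 s k * c k) *: M k)); last first.
    by move=> k _; rewrite -scalerAr LM // scalerDr scalerA mulrC.
  rewrite big_split /= [X in _ = X](eq_bigr (fun k : 'I_n.+1 =>
     (nth 0 s k * c k) *: M k + (if (k : nat) is k'.+1 then c k' else 0) *: M k)); last first.
    by move=> k _; rewrite scalerDl.
  rewrite big_split /= addrC; congr (_ + _).
  rewrite big_ord_recr /= Mlast scaler0 addr0 [in RHS]big_ord_recl /= scale0r add0r.
  by apply: eq_bigr.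
move=> k; apply: le_trans (ler_normD _ _) _.
rewrite normrM.
have h1 : `|nth 0 s k| * `|c k| <= rho * (eta ^+ k * r ^+ m).
  by apply: ler_pM; rewrite ?normr_ge0 ?hnth ?hb.
case: k h1 => [|k] h1.
  rewrite normr0 addr0 expr0 mul1r exprS; apply: le_trans h1 _.
  by rewrite expr0 mul1r ler_wpM2r ?exprn_ge0 // (le_trans rho0).
apply: le_trans (lerD h1 (hb k)) _.
have r0 : 0 <= r by apply: le_trans rhor.
have hk : 0 <= eta ^+ k * r ^+ m by rewrite mulr_ge0 ?exprn_ge0.
have -> : rho * (eta ^+ k.+1 * r ^+ m) + eta ^+ k * r ^+ m
   = (rho * eta + 1) * (eta ^+ k * r ^+ m) by rewrite exprS; ring.
have -> : eta ^+ k.+1 * r ^+ m.+1 = (r * eta) * (eta ^+ k * r ^+ m)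
   by rewrite !exprS; ring.
by rewrite ler_wpM2r.
Qed.

Lemma decay m i j :
  `|(L ^+ m) i j| <= r ^+ m * \sum_(k < n.+1) (eta * D) ^+ k.
Proof.
have [c [hc hb]] := powrep m.
rewrite hc summxE mulr_sumr; apply: le_trans (ler_norm_sum _ _ _) _.
apply: ler_sum => k _; rewrite mxE normrM.
have r0 : 0 <= r by apply: le_trans rhor.
apply: le_trans (ler_pM (normr_ge0 _) (normr_ge0 _) (hb k) (hM k i j)) _.
by rewrite [X in _ <= X](_ : _ = eta ^+ k * r ^+ m * D ^+ k) // exprMn; ring.
Qed.

End Decay.


Lemma geo_sum_le (F : realType) (q : F) m : 0 <= q -> q < 1 ->
  \sum_(i < m) q ^+ i <= (1 - q)^-1.
Proof.
move=> q0 q1.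
have h1 : 0 < 1 - q by rewrite subr_gt0.
have := subrX1 q m => hs.
have -> : \sum_(i < m) q ^+ i = (1 - q)^-1 * ((1 - q) * \sum_(i < m) q ^+ i).
  by rewrite mulKf // gt_eqF.
have -> : (1 - q) * \sum_(i < m) q ^+ i = 1 - q ^+ m.
  by rewrite -[1 - q]opprB mulNr -hs opprB.
apply: ler_piMr; first by rewrite invr_ge0 ltW.
by rewrite lerBlDr lerDl exprn_ge0.
Qed.

Lemma bernoulli (F : realType) (h : F) m : 0 <= h -> 1 + m%:R * h <= (1 + h) ^+ m.
Proof.
move=> h0; elim: m => [|m IH]; first by rewrite mul0r addr0 expr0.
rewrite exprS -nat1r.
have hm : 0 <= m%:R * h by rewrite mulr_ge0 ?ler0n.
have : (1 + h) * (1 + m%:R * h) <= (1 + h) * (1 + h) ^+ m.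
  by rewrite ler_wpM2l // addr_ge0.
apply: le_trans; nra.
Qed.

Lemma geo_small (F : realType) (q C eps : F) : 0 <= q -> q < 1 -> 0 <= C -> 0 < eps ->
  exists m, C * q ^+ m <= eps.
Proof.
move=> q0 q1 C0 e0.
have [->|qn0] := eqVneq q 0.
  by exists 1%N; rewrite expr1 mulr0 ltW.
have qp : 0 < q by rewrite lt_def qn0.
set h := q^-1 - 1.
have hp : 0 < h by rewrite subr_gt0 invf_gt1.
have x0 : 0 <= C / (eps * h) by rewrite divr_ge0 // ltW // mulr_gt0.
set m := Num.Def.archi_bound (C / (eps * h)).
exists m.
have hm := archi_boundP x0.
have qm : q ^+ m = ((1 + h) ^+ m)^-1 by rewrite /h addrC subrK exprVn invrK.
rewrite qm.
have pm : 0 < (1 + h) ^+ m by rewrite exprn_gt0 // addr_gt0.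
rewrite ler_pdivrMr //.
have := bernoulli m (ltW hp).
have : C < eps * (m%:R * h).
  move: hm; rewrite ltr_pdivrMr ?mulr_gt0 //.
  by rewrite [X in _ < X -> _](_ : _ = eps * (m%:R * h)) //; ring.
move=> h1 h2; apply: ltW; apply: lt_le_trans h1 _.
rewrite ler_pM2l //; apply: le_trans h2; rewrite lerDr //.
Qed.

Lemma lyap_iter (F : realType) n (L X E : 'M[F]_n.+1) :
  X = L^T *m X *m L + E ->
  forall m, X = (L ^+ m)^T *m X *m L ^+ m + \sum_(j < m) (L ^+ j)^T *m E *m L ^+ j.
Proof.
move=> hX; elim=> [|m IH].
  by rewrite big_ord0 addr0 expr0 trmx1 mul1mx mulmx1.
have e1 : (L ^+ m)^T *m (L^T *m X *m L) *m L ^+ m = (L ^+ m.+1)^T *m X *m L ^+ m.+1.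
  have -> : L ^+ m.+1 = L *m L ^+ m by rewrite exprS mulmxE.
  by rewrite trmx_mul !mulmxA.
rewrite {1}IH {1}hX mulmxDr mulmxDl e1 big_ord_recr /= -!addrA; congr (_ + _).
exact: addrC.
Qed.

Lemma lyap_bound (F : realType) n (L X E : 'M[F]_n.+1) (G r e : F) :
  0 <= G -> 0 <= r -> r < 1 -> 0 <= e ->
  (forall m i j, `|(L ^+ m) i j| <= r ^+ m * G) ->
  (forall i j, `|E i j| <= e) ->
  X = L^T *m X *m L + E ->
  forall i j, `|X i j| <= n.+1%:R ^+ 2 * G ^+ 2 / (1 - r ^+ 2) * e.
Proof.
move=> G0 r0 r1 e0 hL hE hX i j.
set x := \sum_i0 \sum_j0 `|X i0 j0|.
have hx : forall i j, `|X i j| <= x by move=> *; exact: sumabs_ge.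
have x0 : 0 <= x by apply: le_trans (hx i j).
set N := n.+1%:R : F.
have q0 : 0 <= r ^+ 2 by rewrite exprn_ge0.
have q1 : r ^+ 2 < 1 by rewrite expr_lt1.
have tb : forall m (Y : 'M[F]_n.+1) y, (forall i j, `|Y i j| <= y) ->
    forall i j, `|((L ^+ m)^T *m Y *m L ^+ m) i j| <= N ^+ 2 * G ^+ 2 * y * (r ^+ 2) ^+ m.
  move=> m Y y hY i0 j0.
  apply: le_trans.
    apply: mul_entry_le; last exact: hL.
    apply: mul_entry_le; last exact: hY.
    by apply: tr_entry_le; exact: hL.
  by rewrite le_eqVlt; apply/orP; left; apply/eqP; rewrite -exprM mulnC exprM; ring.
apply/ler_addgt0Pr => eps eps0.
have C0 : 0 <= N ^+ 2 * G ^+ 2 * x by rewrite !mulr_ge0 ?exprn_ge0 ?ler0n.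
have [m hm] := geo_small q0 q1 C0 eps0.
rewrite (lyap_iter hX m) mxE summxE.
apply: le_trans (ler_normD _ _) _.
rewrite addrC; apply: lerD; last by apply: le_trans (tb m X x hx i j) _.
apply: le_trans (ler_norm_sum _ _ _) _.
apply: le_trans (_ : _ <= \sum_(k < m) N ^+ 2 * G ^+ 2 * e * (r ^+ 2) ^+ k) _.
  by apply: ler_sum => k _; exact: tb.
have -> : \sum_(k < m) N ^+ 2 * G ^+ 2 * e * (r ^+ 2) ^+ k
   = N ^+ 2 * G ^+ 2 * e * \sum_(k < m) (r ^+ 2) ^+ k by rewrite mulr_sumr.
have -> : N ^+ 2 * G ^+ 2 / (1 - r ^+ 2) * e = N ^+ 2 * G ^+ 2 * e * (1 - r ^+ 2)^-1.
  by ring.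
by apply: ler_wpM2l; [rewrite !mulr_ge0 ?exprn_ge0 ?ler0n | apply: geo_sum_le].
Qed.


Lemma normc_ge0 (F : realType) (z : F[i]) : 0 <= Normc.normc z.
Proof. by case: z => a b; exact: sqrtr_ge0. Qed.

Lemma normC_normc (F : realType) (z : F[i]) : `|z| = ((Normc.normc z)%:C)%C.
Proof. by case: z => a b; rewrite normc_def. Qed.

Lemma normC_real (F : realType) (x : F) : `|(x%:C)%C| = ((`|x|)%:C)%C.
Proof.
by rewrite normc_def /= expr0n /= addr0 sqrtr_sqr.
Qed.

Lemma spec_decay (F : realType) n (L : 'M[F]_n.+1) (rho a : F) :
  0 <= rho -> rho < 1 -> 0 <= a -> (forall i j, `|L i j| <= a) ->
  spectral_radius L <= rho ->
  forall m i j, `|(L ^+ m) i j| <= ((1 + rho) / 2) ^+ m *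
     \sum_(k < n.+1) (2 / (1 - rho) * (n.+1%:R * (a + rho))) ^+ k.
Proof.
move=> rho0 rho1 a0 hL hsp m i j.
set Lc := map_mx (fun x : F => (x%:C)%C) L.
have [s hs] := closed_field_poly_normal (char_poly Lc).
rewrite (monicP (char_poly_monic _)) scale1r in hs.
have hsize : size s = n.+1.
  by have := size_char_poly Lc; rewrite hs size_prod_XsubC => -[].
have hprod : \prod_(z <- s) (Lc - z%:M) = 0.
  have := Cayley_Hamilton Lc; rewrite hs rmorph_prod => <-.
  by apply: eq_bigr => z _; rewrite rmorphB /= horner_mx_X horner_mx_C.
have hub : has_ubound [set Normc.normc l | l in
        [set l : F[i] | eigenvalue (map_mx (fun a : F => (a%:C)%C) L) l]].
  exists (\sum_(z <- s) Normc.normc z) => _ [l /= hl <-].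
  have ls : l \in s by rewrite -root_prod_XsubC -hs -eigenvalue_root_char.
  rewrite (big_rem l ls) /= lerDl.
  by apply: sumr_ge0 => z _; exact: normc_ge0.
have hz : forall z, z \in s -> `|z| <= (rho%:C)%C.
  move=> z zs; rewrite normC_normc lecR; apply: le_trans hsp.
  apply: (ub_le_sup hub); exists z => //=.
  by rewrite eigenvalue_root_char hs root_prod_XsubC.
set eta := 2 / (1 - rho).
set r := (1 + rho) / 2.
have h1r : 0 < 1 - rho by rewrite subr_gt0.
have eta0 : 0 <= eta by rewrite divr_ge0 // ltW.
have rhor : rho <= r by rewrite /r ler_pdivlMr //; lra.
have her : rho * eta + 1 <= r * eta.
  rewrite /r /eta le_eqVlt; apply/orP; left; apply/eqP; field.
  by rewrite gt_eqF.
have hLc : forall i j, `|Lc i j| <= (a%:C)%C.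
  by move=> i0 j0; rewrite mxE normC_real lecR.
have := @decay _ n Lc s (rho%:C)%C (eta%:C)%C (r%:C)%C (a%:C)%C hsize hprod hz.
rewrite !ler0c !lecR => /(_ rho0 eta0 rhor a0).
clearbody eta r.
have -> : (rho%:C * eta%:C + 1 = (rho * eta + 1)%:C)%C by rewrite rmorphD rmorphM rmorph1.
have -> : (r%:C * eta%:C = (r * eta)%:C)%C by rewrite rmorphM.
rewrite lecR.
move=> /(_ her hLc m i j).
have -> : (Lc ^+ m) i j = (((L ^+ m) i j)%:C)%C by rewrite /Lc -rmorphXn mxE.
rewrite normC_real.
set G := \sum_(k < n.+1) (eta * (n.+1%:R * (a + rho))) ^+ k.
have -> : ((r%:C) ^+ m * \sum_(k < n.+1) (eta%:C * (n.+1%:R * (a%:C + rho%:C))) ^+ k)%C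
   = ((r ^+ m * G)%:C)%C.
  rewrite rmorphM rmorphXn rmorph_sum; congr (_ * _); apply: eq_bigr => k _.
  by rewrite !(rmorphXn, rmorphM, rmorphD, rmorph_nat).
by rewrite lecR.
Qed.


Lemma theta_eq (F : realType) d k (A : 'M[F]_d) (B : 'M[F]_(d, k)) Q Rm P :
  theta A B Q Rm P = block_mx Q 0 0 Rm + (row_mx A B)^T *m P *m row_mx A B.
Proof.
rewrite /theta tr_row_mx mul_col_mx !mul_mx_row !mul_col_mx -block_mxEh add_block_mx.
by rewrite !add0r.
Qed.

Lemma theta_diff (F : realType) d k (A : 'M[F]_d) (B : 'M[F]_(d, k)) Q Rm P P' :
  theta A B Q Rm P - theta A B Q Rm P' = (row_mx A B)^T *m (P - P') *m row_mx A B.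
Proof. by rewrite !theta_eq opprD addrACA subrr add0r mulmxBr mulmxBl. Qed.

Lemma zid1 (V : zmodType) (a b c : V) : (a - b) + (b - c) = a - c.
Proof. by rewrite addrA subrK. Qed.

Lemma zid2 (V : zmodType) (q u u' a v v' : V) :
  (q + u + a) - (q + u' + v') = (a - v) + ((u - u') + (v - v')).
Proof.
rewrite -[q + u + a]addrA -[q + u' + v']addrA [q + (u + a)]addrC addrKA opprD addrACA.
by rewrite [RHS]addrCA zid1.
Qed.

Lemma zid3 (V : zmodType) (a x y : V) : (a - x) - (a - y) = - (x - y).
Proof. by rewrite (opprB a y) addrC zid1 opprB. Qed.


Lemma add_entry_le (R : numDomainType) m n (X Y : 'M[R]_(m,n)) (x y : R) :
  (forall i j, `|X i j| <= x) -> (forall i j, `|Y i j| <= y) ->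
  forall i j, `|(X + Y) i j| <= x + y.
Proof.
move=> hX hY i j; rewrite mxE.
exact: le_trans (ler_normD _ _) (lerD (hX i j) (hY i j)).
Qed.

Lemma split_diff (R : comRingType) a b (X Y : 'M[R]_(a,b)) (M : 'M[R]_a) :
  (X - Y)^T *m M *m X + Y^T *m M *m (X - Y) = X^T *m M *m X - Y^T *m M *m Y.
Proof.
by rewrite linearB /= !mulmxBl mulmxBr zid1.
Qed.

Lemma sumabs_ge0 (R : numDomainType) m n (X : 'M[R]_(m,n)) :
  0 <= \sum_i \sum_j `|X i j|.
Proof. by apply: sumr_ge0 => *; apply: sumr_ge0 => *. Qed.

Lemma main_succ (F : realType) (n k : nat)
  (A : 'M[F]_n.+1) (B : 'M[F]_(n.+1, k)) (Q : 'M[F]_n.+1) (Rm : 'M[F]_k)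
  (rho cA cK : F) :
  0 < rho -> rho < 1 -> 0 < cA -> 0 < cK ->
  exists c1 : F, 0 < c1 /\
    forall (K K' : 'M[F]_(k, n.+1)) (P P' : 'M[F]_n.+1),
      opnorm K <= cK -> opnorm K' <= cK ->
      opnorm (A - B *m K) <= cA -> opnorm (A - B *m K') <= cA ->
      spectral_radius (A - B *m K) <= rho ->
      spectral_radius (A - B *m K') <= rho ->
      lyap_sol A B Q Rm K P -> lyap_sol A B Q Rm K' P' ->
      frob (theta A B Q Rm P - theta A B Q Rm P') <= c1 * frob (K - K').
Proof.
move=> rho0 rho1 cA0 cK0.
set N := n.+1%:R : F.
set kk := k%:R : F.
set r := (1 + rho) / 2.
set G := \sum_(l < n.+1) (2 / (1 - rho) * (N * (cA + rho))) ^+ l.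
set S := N ^+ 2 * G ^+ 2 / (1 - r ^+ 2).
set bB := \sum_i \sum_j `|B i j|.
set bR := \sum_i \sum_j `|Rm i j|.
set bQ := \sum_i \sum_j `|Q i j|.
set bT := \sum_i \sum_j `|(row_mx A B) i j|.
set w := bQ + kk * ((kk * (cK * bR)) * cK).
set p := S * w.
set Ce := kk * ((kk * bR) * cK) + kk * (kk * (cK * bR)) +
   (N * ((N * ((kk * bB) * p)) * cA) + N * ((N * (cA * p)) * (kk * bB))).
set c0 := ((n.+1 + k) * (n.+1 + k))%:R * (N * ((N * (bT * (S * Ce))) * bT)).
have N0 : 0 <= N by rewrite ler0n.
have kk0 : 0 <= kk by rewrite ler0n.
have r0 : 0 <= r by rewrite /r divr_ge0 //; lra.
have r1 : r < 1 by rewrite /r ltr_pdivrMr //; lra.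
have r21 : 0 < 1 - r ^+ 2 by rewrite subr_gt0 expr_lt1.
have G0 : 0 <= G.
  apply: sumr_ge0 => l _; apply: exprn_ge0; apply: mulr_ge0.
    by rewrite divr_ge0 // subr_ge0 ltW.
  by rewrite mulr_ge0 // addr_ge0 // ltW.
have S0 : 0 <= S by rewrite /S !mulr_ge0 ?exprn_ge0 // invr_ge0 ltW.
have bB0 : 0 <= bB by apply: sumabs_ge0.
have bR0 : 0 <= bR by apply: sumabs_ge0.
have bQ0 : 0 <= bQ by apply: sumabs_ge0.
have bT0 : 0 <= bT by apply: sumabs_ge0.
have cK0' : 0 <= cK by apply: ltW.
have cA0' : 0 <= cA by apply: ltW.
have w0 : 0 <= w by rewrite /w; repeat (apply: addr_ge0 || apply: mulr_ge0).
have p0 : 0 <= p by rewrite /p mulr_ge0.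
have Ce0 : 0 <= Ce by rewrite /Ce; repeat (done || apply: addr_ge0 || apply: mulr_ge0).
have c00 : 0 <= c0 by rewrite /c0; repeat (done || apply: addr_ge0 || apply: mulr_ge0); rewrite ler0n.
exists (c0 + 1); split; first by lra.
move=> K K' P P' hK hK' hL hL' hs hs' hP hP'.
set L := A - B *m K.
set L' := A - B *m K'.
have hKe : forall i j, `|K i j| <= cK by move=> i j; apply: le_trans (entry_le_opnorm _ _ _) hK.
have hKe' : forall i j, `|K' i j| <= cK by move=> i j; apply: le_trans (entry_le_opnorm _ _ _) hK'.
have hLe : forall i j, `|L i j| <= cA by move=> i j; apply: le_trans (entry_le_opnorm _ _ _) hL.
have hLe' : forall i j, `|L' i j| <= cA by move=> i j; apply: le_trans (entry_le_opnorm _ _ _) hL'.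
have hLd : forall m i j, `|(L ^+ m) i j| <= r ^+ m * G :=
  spec_decay (ltW rho0) rho1 cA0' hLe hs.
have hLd' : forall m i j, `|(L' ^+ m) i j| <= r ^+ m * G :=
  spec_decay (ltW rho0) rho1 cA0' hLe' hs'.
have hPb : forall i j, `|P' i j| <= p.
  have hW : forall i j, `|(Q + K'^T *m Rm *m K') i j| <= w.
    apply: add_entry_le; first by move=> *; apply: sumabs_ge.
    apply: mul_entry_le => //; apply: mul_entry_le => //.
      by apply: tr_entry_le.
    by move=> *; apply: sumabs_ge.
  have eq' : P' = L'^T *m P' *m L' + (Q + K'^T *m Rm *m K') by rewrite addrC.
  by move=> i j; apply: le_trans (lyap_bound G0 r0 r1 w0 hLd' hW eq' i j) _.
set de := frob (K - K').
have de0 : 0 <= de by apply: frob_ge0.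
have hD : forall i j, `|(K - K') i j| <= de by move=> i j; apply: entry_le_frob.
have hLL : L - L' = - (B *m (K - K')) by rewrite /L /L' zid3 mulmxBr.
have hLLe : forall i j, `|(L - L') i j| <= kk * (bB * de).
  move=> i j; rewrite hLL mxE normrN; apply: mul_entry_le => //.
  by move=> *; apply: sumabs_ge.
set E := (K - K')^T *m Rm *m K + K'^T *m Rm *m (K - K') +
   ((L - L')^T *m P' *m L + L'^T *m P' *m (L - L')).
have hXE : P - P' = L^T *m (P - P') *m L + E.
  rewrite {1}hP {1}hP' (zid2 _ _ _ _ (L^T *m P' *m L)) -/L -/L'.
  by rewrite [L^T *m (P - P')]mulmxBr mulmxBl /E !split_diff.
have hRe : forall i j, `|Rm i j| <= bR by move=> i j; exact: sumabs_ge.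
have hPe : forall i j, `|P' i j| <= p := hPb.
have h1 := mul_entry_le (mul_entry_le (tr_entry_le hD) hRe) hKe.
have h2 := mul_entry_le (mul_entry_le (tr_entry_le hKe') hRe) hD.
have h3 := mul_entry_le (mul_entry_le (tr_entry_le hLLe) hPe) hLe.
have h4 := mul_entry_le (mul_entry_le (tr_entry_le hLe') hPe) hLLe.
have hEe : forall i j, `|E i j| <= de * Ce.
  move=> i j; apply: le_trans (add_entry_le (add_entry_le h1 h2) (add_entry_le h3 h4) i j) _.
  rewrite le_eqVlt; apply/orP; left; apply/eqP; rewrite /Ce /kk /N.
  move: (de) (bB) (bR) (cK) (cA) (p) (k%:R : F) (n.+1%:R : F) => x1 x2 x3 x4 x5 x6 x7 x8; ring.
have hXb : forall i j, `|(P - P') i j| <= S * (de * Ce).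
  move=> i j; exact: (lyap_bound G0 r0 r1 (mulr_ge0 de0 Ce0) hLd hEe hXE i j).
rewrite theta_diff.
have b0 : 0 <= N * ((N * (bT * (S * (de * Ce)))) * bT).
  by repeat (done || apply: mulr_ge0).
have hTe : forall i j, `|(row_mx A B) i j| <= bT by move=> i j; exact: sumabs_ge.
have hF := frob_le b0 (mul_entry_le (mul_entry_le (tr_entry_le hTe) hXb) hTe).
apply: le_trans hF _.
have -> : ((n.+1 + k) * (n.+1 + k))%:R * (N * ((N * (bT * (S * (de * Ce)))) * bT))
   = c0 * de by rewrite /c0; ring.
by rewrite ler_wpM2r // lerDl.
Qed.

Unset Implicit Arguments. Set Strict Implicit.

Theorem lemma4 (F : realType) (d k : nat)
  (A : 'M[F]_d) (B : 'M[F]_(d, k)) (Q : 'M[F]_d) (Rm : 'M[F]_k)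
  (rho cA cK : F) :
  posdef Q -> posdef Rm ->
  0 < rho -> rho < 1 -> 0 < cA -> 0 < cK ->
  exists c1 : F, 0 < c1 /\
    forall (K K' : 'M[F]_(k, d)) (P P' : 'M[F]_d),
      opnorm K <= cK -> opnorm K' <= cK ->
      opnorm (A - B *m K) <= cA -> opnorm (A - B *m K') <= cA ->
      spectral_radius (A - B *m K) <= rho ->
      spectral_radius (A - B *m K') <= rho ->
      lyap_sol A B Q Rm K P -> lyap_sol A B Q Rm K' P' ->
      frob (theta A B Q Rm P - theta A B Q Rm P') <= c1 * frob (K - K').

Proof.
move=> _ _.
case: d A B Q => [|n] A B Q; last by apply: main_succ.
move=> *; exists 1; split => // K K' P P' *.
rewrite theta_diff.
have -> : P - P' = 0 by apply/matrixP => -[].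
rewrite mulmx0 mul0mx mul1r.
have h0 : forall i j, `|(0 : 'M[F]_(0 + k)) i j| <= 0 by move=> i j; rewrite mxE normr0.
apply: le_trans (frob_le (lexx 0) h0) _.
by rewrite mulr0 frob_ge0.
Qed.
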